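(* Let $0<r<1$ and $0<\theta<\pi/2$. Let $Q\subset\mathbb{D}$ be the domain bounded by four circular arcs: the arc in the upper half-plane orthogonal to the unit circle at $e^{i\theta}$ and $e^{i(\pi-\theta)}$; the arc in the lower half-plane orthogonal to the unit circle at $e^{i(\theta-\pi)}$ and $e^{-i\theta}$; the circular arc through $r$, $i$, $-i$; and the circular arc through $-r$, $i$, $-i$. Let $a,b,c,d$ be the points of intersection of these arcs lying in the second, third, fourth and first quadrants respectively. Then $$\mathrm{QM}(Q;a,b,c,d)=\frac{\pi-2\beta}{\rho},$$ where $u=\tan(\theta/2)$, $\rho=2\log\frac{1+u}{1-u}$ and $\beta=\operatorname{arccot}\frac{2r}{1-r^2}$.
   Context: A quadrilateral $(D;z_1,z_2,z_3,z_4)$ is a Jordan domain $D\subset\mathbb{C}$ together with four points $z_1,z_2,z_3,z_4\in\partial D$ in positive order on $\partial D$. Its modulus $\mathrm{QM}(D;z_1,z_2,z_3,z_4)=h$ is defined by the requirement that there is a conformal map of $D$ onto the rectangle with vertices $1+ih, ih, 0, 1$ extending to the boundary so that $z_1\mapsto 1+ih$, $z_2\mapsto ih$, $z_3\mapsto 0$, $z_4\mapsto 1$. Equivalently, it is the conformal modulus of the family of all curves in $D$ joining the boundary arc from $z_2$ to $z_3$ with the boundary arc from $z_4$ to $z_1$. $\mathbb{D}$ denotes the unit disk. *)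

(* Defs.v *)
From Stdlib Require Import Reals.
Open Scope R_scope.

Definition Cpx : Type := (R * R)%type.
Definition Cre (z : Cpx) : R := fst z.
Definition Cim (z : Cpx) : R := snd z.
Definition Cadd (z w : Cpx) : Cpx := (fst z + fst w, snd z + snd w).
Definition Csub (z w : Cpx) : Cpx := (fst z - fst w, snd z - snd w).
Definition Cmul (z w : Cpx) : Cpx :=
  (fst z * fst w - snd z * snd w, fst z * snd w + snd z * fst w).
Definition Cmod (z : Cpx) : R := sqrt (fst z ^ 2 + snd z ^ 2).
Definition Cexpi (t : R) : Cpx := (cos t, sin t).

Definition continuous_on (F : Cpx -> Cpx) (S : Cpx -> Prop) : Prop :=
  forall z, S z -> forall eps, eps > 0 -> exists delta, delta > 0 /\
    forall w, S w -> Cmod (Csub w z) < delta -> Cmod (Csub (F w) (F z)) < eps.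

Definition holomorphic_on (F : Cpx -> Cpx) (D : Cpx -> Prop) : Prop :=
  forall z, D z -> exists l : Cpx, forall eps, eps > 0 -> exists delta, delta > 0 /\
    forall h : Cpx, Cmod h < delta ->
      Cmod (Csub (Csub (F (Cadd z h)) (F z)) (Cmul l h)) <= eps * Cmod h.

Definition closure (D : Cpx -> Prop) (z : Cpx) : Prop :=
  forall eps, eps > 0 -> exists w, D w /\ Cmod (Csub w z) < eps.

Definition open_rect (h : R) (w : Cpx) : Prop :=
  0 < fst w < 1 /\ 0 < snd w < h.
Definition closed_rect (h : R) (w : Cpx) : Prop :=
  0 <= fst w <= 1 /\ 0 <= snd w <= h.

(* QM(D; z1,z2,z3,z4) = h : there is a conformal map of D onto the rectangle
   with vertices 1+ih, ih, 0, 1 extending to a homeomorphism of the closures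
   (bijective and continuous on the compact closure) with
   z1 |-> 1+ih, z2 |-> ih, z3 |-> 0, z4 |-> 1. *)
Definition IsQM (D : Cpx -> Prop) (z1 z2 z3 z4 : Cpx) (h : R) : Prop :=
  h > 0 /\
  exists F : Cpx -> Cpx,
    holomorphic_on F D /\
    (forall z, D z -> open_rect h (F z)) /\
    (forall w, open_rect h w -> exists z, D z /\ F z = w) /\
    continuous_on F (closure D) /\
    (forall z, closure D z -> closed_rect h (F z)) /\
    (forall w, closed_rect h w -> exists z, closure D z /\ F z = w) /\
    (forall z1' z2', closure D z1' -> closure D z2' -> F z1' = F z2' -> z1' = z2') /\
    F z1 = (1, h) /\ F z2 = (0, h) /\ F z3 = (0, 0) /\ F z4 = (1, 0).

(* principal arccot, values in (0, pi) *)
Definition arccot (x : R) : R := PI / 2 - atan x.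

(* Circle orthogonal to the unit circle through e^{i th}, e^{i(pi-th)}:
   center i / sin th, radius cot th; and its mirror image in the real axis. *)
Definition upper_center (th : R) : Cpx := (0, 1 / sin th).
Definition lower_center (th : R) : Cpx := (0, - (1 / sin th)).
Definition orth_radius (th : R) : R := cos th / sin th.
(* Circle through r, i, -i: center ((r^2-1)/(2r), 0), radius (1+r^2)/(2r);
   circle through -r, i, -i: mirror image in the imaginary axis. *)
Definition right_center (r : R) : Cpx := ((r ^ 2 - 1) / (2 * r), 0).
Definition left_center (r : R) : Cpx := ((1 - r ^ 2) / (2 * r), 0).
Definition lens_radius (r : R) : R := (1 + r ^ 2) / (2 * r).

Definition Qdom (r th : R) (z : Cpx) : Prop :=
  Cmod z < 1 /\
  Cmod (Csub z (right_center r)) < lens_radius r /\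
  Cmod (Csub z (left_center r)) < lens_radius r /\
  Cmod (Csub z (upper_center th)) > orth_radius th /\
  Cmod (Csub z (lower_center th)) > orth_radius th.

(* Main.v *)
Require Import Defs.
From Stdlib Require Import Reals Lra Lia Psatz Ranalysis4.
Open Scope R_scope.


Definition nrm (h k : R) := Rabs h + Rabs k.

Definition D2 (f : R -> R -> R) (x y a b : R) : Prop :=
  forall eps, eps > 0 -> exists del, del > 0 /\
    forall h k, nrm h k < del ->
      Rabs (f (x + h) (y + k) - f x y - (a * h + b * k)) <= eps * nrm h k.

Lemma nrm_ge0 h k : 0 <= nrm h k.
Proof. unfold nrm; pose proof (Rabs_pos h); pose proof (Rabs_pos k); lra. Qed.

Lemma lin_bound a b h k : Rabs (a * h + b * k) <= (Rabs a + Rabs b) * nrm h k.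
Proof.
  unfold nrm. eapply Rle_trans; [apply Rabs_triang|]. rewrite !Rabs_mult.
  pose proof (Rabs_pos a); pose proof (Rabs_pos b); pose proof (Rabs_pos h); pose proof (Rabs_pos k).
  nra.
Qed.

Lemma D2_bound f x y a b : D2 f x y a b -> exists del, del > 0 /\
  forall h k, nrm h k < del -> Rabs (f (x + h) (y + k) - f x y) <= (Rabs a + Rabs b + 1) * nrm h k.
Proof.
  intros H. destruct (H 1 ltac:(lra)) as [d [Hd Hb]]. exists d; split; auto.
  intros h k Hn. specialize (Hb h k Hn). pose proof (lin_bound a b h k).
  replace (f (x + h) (y + k) - f x y) with ((f (x + h) (y + k) - f x y - (a * h + b * k)) + (a*h+b*k)) by ring.
  eapply Rle_trans; [apply Rabs_triang|]. lra.
Qed.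

Lemma D2_ext f x y a b a' b' : a = a' -> b = b' -> D2 f x y a b -> D2 f x y a' b'.
Proof. intros -> ->; auto. Qed.

Lemma D2_const c x y : D2 (fun _ _ => c) x y 0 0.
Proof. intros e He; exists 1; split; [lra|]; intros h k _.
  replace (c - c - (0*h+0*k)) with 0 by ring. rewrite Rabs_R0. pose proof (nrm_ge0 h k); nra. Qed.

Lemma D2_fst x y : D2 (fun x _ => x) x y 1 0.
Proof. intros e He; exists 1; split; [lra|]; intros h k _.
  replace (x + h - x - (1*h+0*k)) with 0 by ring. rewrite Rabs_R0. pose proof (nrm_ge0 h k); nra. Qed.

Lemma D2_snd x y : D2 (fun _ y => y) x y 0 1.
Proof. intros e He; exists 1; split; [lra|]; intros h k _.
  replace (y + k - y - (0*h+1*k)) with 0 by ring. rewrite Rabs_R0. pose proof (nrm_ge0 h k); nra. Qed.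

Lemma D2_add f g x y a b c d : D2 f x y a b -> D2 g x y c d ->
  D2 (fun x y => f x y + g x y) x y (a + c) (b + d).
Proof.
  intros Hf Hg e He. destruct (Hf (e/2) ltac:(lra)) as [d1 [Hd1 H1]].
  destruct (Hg (e/2) ltac:(lra)) as [d2 [Hd2 H2]].
  exists (Rmin d1 d2); split; [apply Rmin_glb_lt; lra|]. intros h k Hn.
  pose proof (Rmin_l d1 d2); pose proof (Rmin_r d1 d2).
  specialize (H1 h k ltac:(lra)); specialize (H2 h k ltac:(lra)).
  replace (f (x + h) (y + k) + g (x + h) (y + k) - (f x y + g x y) - ((a + c) * h + (b + d) * k))
    with ((f (x + h) (y + k) - f x y - (a * h + b * k)) + (g (x + h) (y + k) - g x y - (c * h + d * k))) by ring.
  eapply Rle_trans; [apply Rabs_triang|]. lra.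
Qed.

Lemma D2_scal c f x y a b : D2 f x y a b -> D2 (fun x y => c * f x y) x y (c * a) (c * b).
Proof.
  intros Hf e He. destruct (Hf (e/(Rabs c + 1))) as [d1 [Hd1 H1]].
  { pose proof (Rabs_pos c). apply Rdiv_lt_0_compat; lra. }
  exists d1; split; auto. intros h k Hn. specialize (H1 h k Hn).
  replace (c * f (x + h) (y + k) - c * f x y - (c * a * h + c * b * k))
    with (c * (f (x + h) (y + k) - f x y - (a * h + b * k))) by ring.
  rewrite Rabs_mult. pose proof (Rabs_pos c). pose proof (nrm_ge0 h k).
  apply Rle_trans with ((Rabs c + 1) * (e / (Rabs c + 1) * nrm h k)).
  - pose proof (Rabs_pos (f (x + h) (y + k) - f x y - (a * h + b * k))). nra.
  - right; field; lra.
Qed.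



Lemma D2_fext f g x y a b : (forall x y, f x y = g x y) -> D2 f x y a b -> D2 g x y a b.
Proof. intros E H e He. destruct (H e He) as [d [Hd H1]]. exists d; split; auto.
  intros h k Hn. rewrite <- !E. auto. Qed.

Lemma D2_mul f g x y a b c d : D2 f x y a b -> D2 g x y c d ->
  D2 (fun x y => f x y * g x y) x y (f x y * c + g x y * a) (f x y * d + g x y * b).
Proof.
  intros Hf Hg e He.
  set (f0 := f x y). set (g0 := g x y).
  destruct (D2_bound _ _ _ _ _ Hf) as [d0 [Hd0 B0]].
  destruct (D2_bound _ _ _ _ _ Hg) as [d0' [Hd0' B0']].
  set (Cf := Rabs a + Rabs b + 1). set (Cg := Rabs c + Rabs d + 1).
  assert (HCf : Cf > 0) by (unfold Cf; pose proof (Rabs_pos a); pose proof (Rabs_pos b); lra).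
  assert (HCg : Cg > 0) by (unfold Cg; pose proof (Rabs_pos c); pose proof (Rabs_pos d); lra).
  assert (Pf : Rabs g0 + 1 > 0) by (pose proof (Rabs_pos g0); lra).
  assert (Pg : Rabs f0 + 1 > 0) by (pose proof (Rabs_pos f0); lra).
  destruct (Hf (e/3/(Rabs g0 + 1))) as [d1 [Hd1 H1]]. { apply Rdiv_lt_0_compat; lra. }
  destruct (Hg (e/3/(Rabs f0 + 1))) as [d2 [Hd2 H2]]. { apply Rdiv_lt_0_compat; lra. }
  set (d3 := e / 3 / (Cf * Cg)).
  assert (Hd3 : d3 > 0) by (unfold d3; apply Rdiv_lt_0_compat; nra).
  exists (Rmin (Rmin d0 d0') (Rmin (Rmin d1 d2) d3)); split.
  { repeat apply Rmin_glb_lt; lra. }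
  intros h k Hn.
  pose proof (Rmin_l (Rmin d0 d0') (Rmin (Rmin d1 d2) d3)).
  pose proof (Rmin_r (Rmin d0 d0') (Rmin (Rmin d1 d2) d3)).
  pose proof (Rmin_l d0 d0'). pose proof (Rmin_r d0 d0').
  pose proof (Rmin_l (Rmin d1 d2) d3). pose proof (Rmin_r (Rmin d1 d2) d3).
  pose proof (Rmin_l d1 d2). pose proof (Rmin_r d1 d2).
  specialize (B0 h k ltac:(lra)). specialize (B0' h k ltac:(lra)).
  specialize (H1 h k ltac:(lra)). specialize (H2 h k ltac:(lra)).
  change (f x y) with f0 in B0, H1. change (g x y) with g0 in B0', H2.
  set (n := nrm h k) in *. assert (Hn0 : 0 <= n) by apply nrm_ge0.
  set (Ef := f (x + h) (y + k) - f0 - (a * h + b * k)) in *.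
  set (Eg := g (x + h) (y + k) - g0 - (c * h + d * k)) in *.
  set (Df := f (x + h) (y + k) - f0) in *. set (Dg := g (x + h) (y + k) - g0) in *.
  replace (f (x + h) (y + k) * g (x + h) (y + k) - f0 * g0 - ((f0 * c + g0 * a) * h + (f0 * d + g0 * b) * k))
    with (f0 * Eg + g0 * Ef + Df * Dg) by (unfold Eg, Ef, Df, Dg; ring).
  assert (T1 : Rabs (f0 * Eg) <= e/3 * n).
  { rewrite Rabs_mult. apply Rle_trans with ((Rabs f0 + 1) * (e / 3 / (Rabs f0 + 1) * n)).
    - pose proof (Rabs_pos f0); pose proof (Rabs_pos Eg). nra.
    - right; field; lra. }
  assert (T2 : Rabs (g0 * Ef) <= e/3 * n).
  { rewrite Rabs_mult. apply Rle_trans with ((Rabs g0 + 1) * (e / 3 / (Rabs g0 + 1) * n)).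
    - pose proof (Rabs_pos g0); pose proof (Rabs_pos Ef). nra.
    - right; field; lra. }
  assert (T3 : Rabs (Df * Dg) <= e/3 * n).
  { rewrite Rabs_mult. apply Rle_trans with ((Cf * n) * (Cg * n)).
    - apply Rmult_le_compat; try apply Rabs_pos; auto.
    - assert (n < d3) by lra. unfold d3 in *.
      apply Rle_trans with (Cf * Cg * n * (e/3/(Cf*Cg))).
      + replace (Cf * n * (Cg * n)) with (Cf * Cg * n * n) by ring. assert (0 < Cf * Cg) by nra. apply Rmult_le_compat_l; [apply Rmult_le_pos; lra|lra].
      + right; field; lra. }
  eapply Rle_trans; [apply Rabs_triang|].
  eapply Rle_trans; [apply Rplus_le_compat_r; apply Rabs_triang|]. lra.
Qed.

Lemma deriv_bound g t c : derivable_pt_lim g t c ->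
  forall e, e > 0 -> exists del, del > 0 /\ forall dd, Rabs dd < del ->
    Rabs (g (t + dd) - g t - c * dd) <= e * Rabs dd.
Proof.
  intros H e He. destruct (H e He) as [del Hdel]. exists del; split; [apply cond_pos|].
  intros dd Hd. destruct (Req_dec dd 0) as [->|Hnz].
  - replace (t + 0) with t by ring. replace (g t - g t - c * 0) with 0 by ring.
    rewrite Rabs_R0; lra.
  - specialize (Hdel dd Hnz Hd).
    replace (g (t + dd) - g t - c * dd) with (((g (t + dd) - g t) / dd - c) * dd) by (field; auto).
    rewrite Rabs_mult. apply Rmult_le_compat_r; [apply Rabs_pos|lra].
Qed.

Lemma D2_comp1 (g : R -> R) f x y a b c : derivable_pt_lim g (f x y) c -> D2 f x y a b ->
  D2 (fun x y => g (f x y)) x y (c * a) (c * b).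
Proof.
  intros Hg Hf e He.
  destruct (D2_bound _ _ _ _ _ Hf) as [d0 [Hd0 B0]].
  set (C := Rabs a + Rabs b + 1).
  assert (HC : C > 0) by (unfold C; pose proof (Rabs_pos a); pose proof (Rabs_pos b); lra).
  destruct (deriv_bound _ _ _ Hg (e/2/C)) as [d1 [Hd1 H1]]. { apply Rdiv_lt_0_compat; lra. }
  assert (Pc : Rabs c + 1 > 0) by (pose proof (Rabs_pos c); lra).
  destruct (Hf (e/2/(Rabs c + 1))) as [d2 [Hd2 H2]]. { apply Rdiv_lt_0_compat; lra. }
  exists (Rmin d0 (Rmin d2 (d1 / C))); split.
  { repeat apply Rmin_glb_lt; try lra. apply Rdiv_lt_0_compat; lra. }
  intros h k Hn.
  pose proof (Rmin_l d0 (Rmin d2 (d1 / C))). pose proof (Rmin_r d0 (Rmin d2 (d1 / C))).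
  pose proof (Rmin_l d2 (d1 / C)). pose proof (Rmin_r d2 (d1 / C)).
  specialize (B0 h k ltac:(lra)). specialize (H2 h k ltac:(lra)).
  set (n := nrm h k) in *. assert (Hn0 : 0 <= n) by apply nrm_ge0.
  set (Df := f (x + h) (y + k) - f x y) in *.
  assert (HDf : Rabs Df < d1).
  { apply Rle_lt_trans with (C * n); [exact B0|].
    assert (n < d1 / C) by lra.
    apply Rlt_le_trans with (C * (d1 / C)); [nra|]. right; field; lra. }
  specialize (H1 Df HDf).
  replace (f x y + Df) with (f (x + h) (y + k)) in H1 by (unfold Df; ring).
  replace (g (f (x + h) (y + k)) - g (f x y) - (c * a * h + c * b * k))
    with ((g (f (x + h) (y + k)) - g (f x y) - c * Df) + c * (Df - (a * h + b * k))) by (unfold Df; ring).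
  eapply Rle_trans; [apply Rabs_triang|].
  assert (T1 : e / 2 / C * Rabs Df <= e/2 * n).
  { apply Rle_trans with (e / 2 / C * (C * n)).
    - apply Rmult_le_compat_l; [|exact B0]. left; apply Rdiv_lt_0_compat; lra.
    - right; field; lra. }
  assert (T2 : Rabs (c * (Df - (a * h + b * k))) <= e/2 * n).
  { rewrite Rabs_mult. apply Rle_trans with ((Rabs c + 1) * (e / 2 / (Rabs c + 1) * n)).
    - pose proof (Rabs_pos c); pose proof (Rabs_pos (Df - (a * h + b * k))). nra.
    - right; field; lra. }
  lra.
Qed.

Lemma dlim_inv t : t <> 0 -> derivable_pt_lim (fun u => / u) t (- / t ^ 2).
Proof.
  intros Ht. pose (pr := derivable_pt_id t).
  assert (na : id t <> 0) by exact Ht.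
  pose proof (derive_pt_inv id t pr na) as E.
  pose proof (derive_pt_eq_1 _ _ _ _ E) as L.
  rewrite derive_pt_id in L.
  replace (- / t ^ 2) with (- 1 / Rsqr (id t)) by (unfold Rsqr, id; field; auto).
  exact L.
Qed.

Lemma D2_ext' f x y a b a' b' : D2 f x y a b -> a = a' -> b = b' -> D2 f x y a' b'.
Proof. intros H -> ->; auto. Qed.

Lemma D2_sub f g x y a b c d : D2 f x y a b -> D2 g x y c d ->
  D2 (fun x y => f x y - g x y) x y (a - c) (b - d).
Proof.
  intros Hf Hg. apply (D2_scal (-1)) in Hg. pose proof (D2_add _ _ _ _ _ _ _ _ Hf Hg) as H.
  eapply D2_fext; [|eapply D2_ext'; [exact H| |]]; simpl; intros; ring.
Qed.

Lemma D2_divc c f x y a b : D2 f x y a b -> D2 (fun x y => f x y / c) x y (a / c) (b / c).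
Proof.
  intros Hf. apply (D2_scal (/c)) in Hf.
  eapply D2_fext; [|eapply D2_ext'; [exact Hf| |]]; simpl; intros; unfold Rdiv; ring.
Qed.

Lemma D2_inv f x y a b : f x y <> 0 -> D2 f x y a b ->
  D2 (fun x y => / f x y) x y (- / (f x y) ^ 2 * a) (- / (f x y) ^ 2 * b).
Proof. intros H Hf. apply (D2_comp1 (fun u => / u)); auto. apply dlim_inv; auto. Qed.

Lemma D2_ln f x y a b : 0 < f x y -> D2 f x y a b ->
  D2 (fun x y => ln (f x y)) x y (/ f x y * a) (/ f x y * b).
Proof. intros H Hf. apply (D2_comp1 ln); auto. apply derivable_pt_lim_ln; auto. Qed.

Lemma D2_atan f x y a b : D2 f x y a b ->
  D2 (fun x y => atan (f x y)) x y (/ (1 + (f x y)^2) * a) (/ (1 + (f x y)^2) * b).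
Proof. intros Hf. apply (D2_comp1 atan); auto. apply derivable_pt_lim_atan. Qed.

Lemma D2_sq f x y a b : D2 f x y a b ->
  D2 (fun x y => f x y * f x y) x y (f x y * a + f x y * a) (f x y * b + f x y * b).
Proof. intros H. apply D2_mul; auto. Qed.

Definition Pf (x y : R) := x * x + (1 + y) * (1 + y).
Definition Mf (x y : R) := x * x + (1 - y) * (1 - y).
Definition Sf (x y : R) := 1 - x * x - y * y.
Definition Tf (x y : R) := (-2 * x) * / Sf x y.
Definition Xf (K RHO : R) (x y : R) := ((ln (Pf x y) - ln (Mf x y)) / 2 + ln K) / RHO.
Definition Yf (PHI RHO : R) (x y : R) := (atan (Tf x y) + PHI) / RHO.

Lemma D2_P x y : D2 Pf x y (2 * x) (2 * (1 + y)).
Proof.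
  unfold Pf. eapply D2_ext'.
  - apply D2_add; apply D2_sq; [apply D2_fst|]. apply D2_add; [apply D2_const|apply D2_snd].
  - simpl; ring.
  - simpl; ring.
Qed.

Lemma D2_M x y : D2 Mf x y (2 * x) (- 2 * (1 - y)).
Proof.
  unfold Mf. eapply D2_ext'.
  - apply D2_add; apply D2_sq; [apply D2_fst|]. apply D2_sub; [apply D2_const|apply D2_snd].
  - simpl; ring.
  - simpl; ring.
Qed.

Lemma D2_S x y : D2 Sf x y (- 2 * x) (- 2 * y).
Proof.
  unfold Sf. eapply D2_ext'.
  - apply D2_sub; [apply D2_sub; [apply D2_const|]|]; apply D2_sq; [apply D2_fst|apply D2_snd].
  - simpl; ring.
  - simpl; ring.
Qed.

Lemma D2_T x y : Sf x y <> 0 ->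
  D2 Tf x y ((-2 * Sf x y - 4 * x * x) / (Sf x y)^2) (- 4 * x * y / (Sf x y)^2).
Proof.
  intros HS. unfold Tf. eapply D2_ext'.
  - apply D2_mul; [apply (D2_scal (-2)); apply D2_fst|]. apply D2_inv; auto. apply D2_S.
  - cbv beta; field; auto.
  - cbv beta; field; auto.
Qed.

Lemma D2_X K RHO x y : 0 < Pf x y -> 0 < Mf x y -> RHO <> 0 ->
  D2 (Xf K RHO) x y ((x / Pf x y - x / Mf x y) / RHO) (((1 + y) / Pf x y + (1 - y) / Mf x y) / RHO).
Proof.
  intros HP HM HR. unfold Xf. eapply D2_ext'.
  - apply D2_divc. apply D2_add; [|apply D2_const]. apply D2_divc.
    apply D2_sub; apply D2_ln; auto; [apply D2_P|apply D2_M].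
  - field; lra.
  - field; lra.
Qed.

Lemma D2_Y PHI RHO x y : 0 < Pf x y -> 0 < Mf x y -> RHO <> 0 -> Sf x y <> 0 ->
  D2 (Yf PHI RHO) x y (- (((1 + y) / Pf x y + (1 - y) / Mf x y) / RHO)) ((x / Pf x y - x / Mf x y) / RHO).
Proof.
  intros HP HM HR HS. unfold Yf. eapply D2_ext'.
  - apply D2_divc. apply D2_add; [|apply D2_const]. apply D2_atan. apply D2_T; auto.
  - cbv beta. unfold Tf. assert (E : Pf x y * Mf x y = Sf x y ^ 2 + 4 * x * x) by (unfold Pf, Mf, Sf; ring).
    assert (0 < Pf x y * Mf x y) by nra.
    assert (E2 : 1 + (-2 * x * / Sf x y) ^ 2 = Pf x y * Mf x y / Sf x y ^ 2) by (rewrite E; field; auto).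
    rewrite E2.
    assert (N : -2 * Sf x y - 4 * x * x = - ((1 + y) * Mf x y + (1 - y) * Pf x y)) by (unfold Pf, Mf, Sf; ring).
    rewrite N. field. repeat split; lra.
  - cbv beta. unfold Tf. assert (E : Pf x y * Mf x y = Sf x y ^ 2 + 4 * x * x) by (unfold Pf, Mf, Sf; ring).
    assert (0 < Pf x y * Mf x y) by nra.
    assert (E2 : 1 + (-2 * x * / Sf x y) ^ 2 = Pf x y * Mf x y / Sf x y ^ 2) by (rewrite E; field; auto).
    rewrite E2.
    assert (N : - 4 * x * y = x * (Mf x y - Pf x y)) by (unfold Pf, Mf, Sf; ring).
    rewrite N. field. repeat split; lra.
Qed.

Lemma ln_lt_iff a b : 0 < a -> 0 < b -> (ln a < ln b <-> a < b).
Proof. intros; split; [apply ln_lt_inv; auto | apply ln_increasing; auto]. Qed.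

Lemma ln_le_iff a b : 0 < a -> 0 < b -> (ln a <= ln b <-> a <= b).
Proof.
  intros Ha Hb; split; intros H.
  - destruct (Rle_or_lt a b) as [|H']; auto. apply ln_increasing in H'; auto. lra.
  - destruct (Rle_or_lt (ln a) (ln b)) as [|H']; auto. apply ln_lt_inv in H'; auto. lra.
Qed.

Lemma atan_lt_iff a b : atan a < atan b <-> a < b.
Proof.
  split; [|apply atan_increasing]. intros H.
  destruct (Rlt_or_le a b) as [|H']; auto. destruct H' as [H'|H'].
  - apply atan_increasing in H'. lra.
  - subst; lra.
Qed.

Lemma atan_le_iff a b : atan a <= atan b <-> a <= b.
Proof.
  split; intros H.
  - destruct (Rle_or_lt a b) as [|H']; auto. apply atan_increasing in H'. lra.
  - destruct (Rle_or_lt (atan a) (atan b)) as [|H']; auto. apply (proj1 (atan_lt_iff b a)) in H'. lra.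
Qed.

Lemma atan_inj a b : atan a = atan b -> a = b.
Proof. intros H. rewrite <- (tan_atan a), <- (tan_atan b), H. reflexivity. Qed.

Lemma sqrt_lt_iff A B : 0 <= A -> 0 < B -> (sqrt A < B <-> A < B ^ 2).
Proof.
  intros HA HB. pose proof (sqrt_pos A). pose proof (sqrt_sqrt A HA).
  split; intros H9; nra.
Qed.

Lemma sqrt_le_iff A B : 0 <= A -> 0 < B -> (sqrt A <= B <-> A <= B ^ 2).
Proof.
  intros HA HB. pose proof (sqrt_pos A). pose proof (sqrt_sqrt A HA).
  split; intros H9; nra.
Qed.

Lemma sqrt_eq_iff A B : 0 <= A -> 0 < B -> (sqrt A = B <-> A = B ^ 2).
Proof.
  intros HA HB. pose proof (sqrt_pos A). pose proof (sqrt_sqrt A HA).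
  split; intros H9.
  - subst. nra.
  - assert (E1 : sqrt A * sqrt A = B * B) by nra.
    assert (E2 : (sqrt A - B) * (sqrt A + B) = 0) by nra.
    apply Rmult_integral in E2. destruct E2; nra.
Qed.

Lemma Cmod_ge0 v : 0 <= Cmod v.
Proof. apply sqrt_pos. Qed.

Lemma Cmod_lt_iff v B : 0 < B -> (Cmod v < B <-> fst v ^ 2 + snd v ^ 2 < B ^ 2).
Proof. intros; apply sqrt_lt_iff; auto. nra. Qed.
Lemma Cmod_le_iff v B : 0 < B -> (Cmod v <= B <-> fst v ^ 2 + snd v ^ 2 <= B ^ 2).
Proof. intros; apply sqrt_le_iff; auto. nra. Qed.
Lemma Cmod_eq_iff v B : 0 < B -> (Cmod v = B <-> fst v ^ 2 + snd v ^ 2 = B ^ 2).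
Proof. intros; apply sqrt_eq_iff; auto. nra. Qed.
Lemma Cmod_gt_iff v B : 0 < B -> (Cmod v > B <-> fst v ^ 2 + snd v ^ 2 > B ^ 2).
Proof. intros HB. pose proof (Cmod_le_iff v B HB). split; intros H1.
  - destruct (Rle_or_lt (fst v ^ 2 + snd v ^ 2) (B ^ 2)); auto. apply H in H0. lra.
  - destruct (Rle_or_lt (Cmod v) B); auto. apply H in H0. lra. Qed.
Lemma Cmod_ge_iff v B : 0 < B -> (Cmod v >= B <-> fst v ^ 2 + snd v ^ 2 >= B ^ 2).
Proof. intros HB. pose proof (Cmod_lt_iff v B HB). split; intros H1.
  - destruct (Rle_or_lt (B ^ 2) (fst v ^ 2 + snd v ^ 2)); [lra|]. apply H in H0. lra.
  - destruct (Rle_or_lt B (Cmod v)); [lra|]. apply H in H0. lra. Qed.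

Lemma Cmod_le_nrm a b : Cmod (a, b) <= nrm a b.
Proof.
  cbv [Cmod nrm fst snd]. pose proof (Rabs_pos a); pose proof (Rabs_pos b).
  rewrite <- (sqrt_pow2 (Rabs a + Rabs b)) by lra.
  apply sqrt_le_1_alt. pose proof (pow2_abs a); pose proof (pow2_abs b). nra.
Qed.

Lemma nrm_le_Cmod a b : nrm a b <= 2 * Cmod (a, b).
Proof.
  cbv [Cmod nrm fst snd]. set (A := a ^ 2 + b ^ 2).
  assert (HA : 0 <= A) by (unfold A; nra).
  pose proof (sqrt_pos A). pose proof (sqrt_sqrt A HA).
  assert (Rabs a <= sqrt A).
  { pose proof (Rabs_pos a). assert (Rabs a ^ 2 <= A) by (unfold A; rewrite pow2_abs; nra). nra. }
  assert (Rabs b <= sqrt A).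
  { pose proof (Rabs_pos b). assert (Rabs b ^ 2 <= A) by (unfold A; rewrite pow2_abs; nra). nra. }
  lra.
Qed.

Lemma D2_cont f x y a b : D2 f x y a b -> forall e, e > 0 -> exists d, d > 0 /\
  forall h k, nrm h k < d -> Rabs (f (x + h) (y + k) - f x y) < e.
Proof.
  intros H e He. destruct (D2_bound _ _ _ _ _ H) as [d0 [Hd0 B]].
  set (C := Rabs a + Rabs b + 1) in *.
  assert (HC : C > 0) by (unfold C; pose proof (Rabs_pos a); pose proof (Rabs_pos b); lra).
  exists (Rmin d0 (e / C)); split. { apply Rmin_glb_lt; [lra|apply Rdiv_lt_0_compat; lra]. }
  intros h k Hn. pose proof (Rmin_l d0 (e / C)). pose proof (Rmin_r d0 (e / C)).
  specialize (B h k ltac:(lra)). pose proof (nrm_ge0 h k).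
  assert (nrm h k < e / C) by lra.
  apply Rle_lt_trans with (C * nrm h k); auto.
  apply Rlt_le_trans with (C * (e / C)); [nra|]. right; field; lra.
Qed.

Definition g1 t x y := t * Sf x y - 2 * x.
Definition g2 t x y := t * Sf x y + 2 * x.
Definition g3 s x y := s * (x * x + y * y + 1) - 2 * y.
Definition g4 s x y := s * (x * x + y * y + 1) + 2 * y.

Definition tt r := 2 * r / (1 - r ^ 2).

Lemma tt_pos r : 0 < r < 1 -> 0 < tt r.
Proof. intros. unfold tt. apply Rdiv_lt_0_compat; nra. Qed.

Lemma sign_pos m D g : m > 0 -> m * D = g -> (D > 0 <-> g > 0).
Proof. intros Hm E; subst; split; intros; nra. Qed.
Lemma sign_zero m D g : m > 0 -> m * D = g -> (D = 0 <-> g = 0).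
Proof. intros Hm E; subst; split; intros H. rewrite H; ring. apply Rmult_integral in H; destruct H; lra. Qed.

Lemma lensR_id r x y : 0 < r < 1 ->
  tt r * (lens_radius r ^ 2 - (fst (Csub (x, y) (right_center r)) ^ 2 + snd (Csub (x, y) (right_center r)) ^ 2))
  = g1 (tt r) x y.
Proof. intros. unfold tt, lens_radius, right_center, Csub, g1, Sf; simpl. field. split; nra. Qed.

Lemma lensL_id r x y : 0 < r < 1 ->
  tt r * (lens_radius r ^ 2 - (fst (Csub (x, y) (left_center r)) ^ 2 + snd (Csub (x, y) (left_center r)) ^ 2))
  = g2 (tt r) x y.
Proof. intros. unfold tt, lens_radius, left_center, Csub, g2, Sf; simpl. field. split; nra. Qed.

Lemma orthU_id th x y : sin th > 0 -> sin th ^ 2 + cos th ^ 2 = 1 ->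
  sin th * ((fst (Csub (x, y) (upper_center th)) ^ 2 + snd (Csub (x, y) (upper_center th)) ^ 2) - orth_radius th ^ 2)
  = g3 (sin th) x y.
Proof.
  intros Hs E. assert (C2 : cos th ^ 2 = 1 - sin th ^ 2) by lra.
  assert (C : (cos th / sin th) ^ 2 = (1 - sin th ^ 2) / sin th ^ 2) by (rewrite <- C2; field; lra).
  unfold orth_radius. rewrite C. cbv [upper_center Csub g3 fst snd]. field. lra.
Qed.

Lemma orthL_id th x y : sin th > 0 -> sin th ^ 2 + cos th ^ 2 = 1 ->
  sin th * ((fst (Csub (x, y) (lower_center th)) ^ 2 + snd (Csub (x, y) (lower_center th)) ^ 2) - orth_radius th ^ 2)
  = g4 (sin th) x y.
Proof.
  intros Hs E. assert (C2 : cos th ^ 2 = 1 - sin th ^ 2) by lra.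
  assert (C : (cos th / sin th) ^ 2 = (1 - sin th ^ 2) / sin th ^ 2) by (rewrite <- C2; field; lra).
  unfold orth_radius. rewrite C. cbv [lower_center Csub g4 fst snd]. field. lra.
Qed.

Lemma lens_radius_pos r : 0 < r < 1 -> 0 < lens_radius r.
Proof. intros; unfold lens_radius; apply Rdiv_lt_0_compat; nra. Qed.
Lemma orth_radius_pos th : sin th > 0 -> cos th > 0 -> 0 < orth_radius th.
Proof. intros; unfold orth_radius; apply Rdiv_lt_0_compat; lra. Qed.

Section Geo.
Variables (r th : R).
Hypothesis Hr : 0 < r < 1.
Hypothesis Hs : sin th > 0.
Hypothesis Hc : cos th > 0.
Hypothesis E : sin th ^ 2 + cos th ^ 2 = 1.

Lemma lensR_lt x y : Cmod (Csub (x, y) (right_center r)) < lens_radius r <-> g1 (tt r) x y > 0.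
Proof.
  rewrite Cmod_lt_iff by (apply lens_radius_pos; auto).
  rewrite <- (sign_pos _ _ _ (tt_pos r Hr) (lensR_id r x y Hr)). lra.
Qed.
Lemma lensL_lt x y : Cmod (Csub (x, y) (left_center r)) < lens_radius r <-> g2 (tt r) x y > 0.
Proof.
  rewrite Cmod_lt_iff by (apply lens_radius_pos; auto).
  rewrite <- (sign_pos _ _ _ (tt_pos r Hr) (lensL_id r x y Hr)). lra.
Qed.
Lemma orthU_gt x y : Cmod (Csub (x, y) (upper_center th)) > orth_radius th <-> g3 (sin th) x y > 0.
Proof.
  rewrite Cmod_gt_iff by (apply orth_radius_pos; auto).
  rewrite <- (sign_pos _ _ _ Hs (orthU_id th x y Hs E)). lra.
Qed.
Lemma orthL_gt x y : Cmod (Csub (x, y) (lower_center th)) > orth_radius th <-> g4 (sin th) x y > 0.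
Proof.
  rewrite Cmod_gt_iff by (apply orth_radius_pos; auto).
  rewrite <- (sign_pos _ _ _ Hs (orthL_id th x y Hs E)). lra.
Qed.
Lemma lensR_eq x y : Cmod (Csub (x, y) (right_center r)) = lens_radius r -> g1 (tt r) x y = 0.
Proof.
  rewrite Cmod_eq_iff by (apply lens_radius_pos; auto).
  rewrite <- (sign_zero _ _ _ (tt_pos r Hr) (lensR_id r x y Hr)). lra.
Qed.
Lemma lensL_eq x y : Cmod (Csub (x, y) (left_center r)) = lens_radius r -> g2 (tt r) x y = 0.
Proof.
  rewrite Cmod_eq_iff by (apply lens_radius_pos; auto).
  rewrite <- (sign_zero _ _ _ (tt_pos r Hr) (lensL_id r x y Hr)). lra.
Qed.
Lemma orthU_eq x y : Cmod (Csub (x, y) (upper_center th)) = orth_radius th -> g3 (sin th) x y = 0.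
Proof.
  rewrite Cmod_eq_iff by (apply orth_radius_pos; auto).
  rewrite <- (sign_zero _ _ _ Hs (orthU_id th x y Hs E)). lra.
Qed.
Lemma orthL_eq x y : Cmod (Csub (x, y) (lower_center th)) = orth_radius th -> g4 (sin th) x y = 0.
Proof.
  rewrite Cmod_eq_iff by (apply orth_radius_pos; auto).
  rewrite <- (sign_zero _ _ _ Hs (orthL_id th x y Hs E)). lra.
Qed.
Lemma disk_lt x y : Cmod (x, y) < 1 <-> Sf x y > 0.
Proof. rewrite Cmod_lt_iff by lra. unfold Sf; simpl. lra. Qed.

Lemma Qdom_iff x y : Qdom r th (x, y) <->
  Sf x y > 0 /\ g1 (tt r) x y > 0 /\ g2 (tt r) x y > 0 /\ g3 (sin th) x y > 0 /\ g4 (sin th) x y > 0.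
Proof.
  unfold Qdom. rewrite disk_lt, lensR_lt, lensL_lt, orthU_gt, orthL_gt. tauto.
Qed.
End Geo.

Lemma div_lt_iff A B C : C > 0 -> (A / C < B <-> A < B * C).
Proof. intros HC. split; intros H.
  - apply (Rmult_lt_compat_r C) in H; auto. replace (A / C * C) with A in H by (field; lra). lra.
  - apply (Rmult_lt_reg_r C); auto. replace (A / C * C) with A by (field; lra). lra. Qed.
Lemma div_gt_iff A B C : C > 0 -> (B < A / C <-> B * C < A).
Proof. intros HC. split; intros H.
  - apply (Rmult_lt_compat_r C) in H; auto. replace (A / C * C) with A in H by (field; lra). lra.
  - apply (Rmult_lt_reg_r C); auto. replace (A / C * C) with A by (field; lra). lra. Qed.
Lemma div_le_iff A B C : C > 0 -> (A / C <= B <-> A <= B * C).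
Proof. intros HC. pose proof (div_gt_iff A B C HC). split; intros H1.
  - destruct (Rle_or_lt A (B * C)); auto. apply H in H0. lra.
  - destruct (Rle_or_lt (A / C) B); auto. apply H in H0. lra. Qed.
Lemma div_ge_iff A B C : C > 0 -> (B <= A / C <-> B * C <= A).
Proof. intros HC. pose proof (div_lt_iff A B C HC). split; intros H1.
  - destruct (Rle_or_lt (B * C) A); auto. apply H in H0. lra.
  - destruct (Rle_or_lt B (A / C)); auto. apply H in H0. lra. Qed.

Lemma P_pos x y : Sf x y > 0 -> 0 < Pf x y.
Proof. unfold Sf, Pf. intros. nra. Qed.
Lemma M_pos x y : Sf x y > 0 -> 0 < Mf x y.
Proof. unfold Sf, Mf. intros. nra. Qed.

Section Xsec.
Variables (K s : R).
Hypothesis HK : K > 1.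
Hypothesis Hs : s = (K * K - 1) / (K * K + 1).
Let RHO := 2 * ln K.

Lemma RHO_pos : RHO > 0.
Proof. unfold RHO. assert (0 < ln K) by (rewrite <- ln_1; apply ln_increasing; lra). lra. Qed.

Lemma g3_rel x y : K * K * Mf x y - Pf x y = (K * K + 1) * g3 s x y.
Proof. rewrite Hs. unfold Mf, Pf, g3. field. nra. Qed.
Lemma g4_rel x y : K * K * Pf x y - Mf x y = (K * K + 1) * g4 s x y.
Proof. rewrite Hs. unfold Mf, Pf, g4. field. nra. Qed.

Lemma KKpos z : 0 < z -> 0 < K * K * z.
Proof. intros. apply Rmult_lt_0_compat; [apply Rmult_lt_0_compat|]; lra. Qed.

Lemma lnKK z : 0 < z -> ln (K * K * z) = ln K + ln K + ln z.
Proof. intros Hz. rewrite (ln_mult (K * K) z) by nra. rewrite (ln_mult K K) by lra. ring. Qed.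

Lemma X_lt1 x y : Sf x y > 0 -> (Xf K RHO x y < 1 <-> g3 s x y > 0).
Proof.
  intros HS. pose proof (P_pos x y HS). pose proof (M_pos x y HS). pose proof RHO_pos.
  unfold Xf. rewrite div_lt_iff by auto.
  assert (Hl : ln (Pf x y) < ln (K * K * Mf x y) <-> Pf x y < K * K * Mf x y) by (apply ln_lt_iff; [lra|apply KKpos; lra]).
  rewrite lnKK in Hl by auto. pose proof (g3_rel x y). unfold RHO.
  split; intros Hq.
  - assert (Pf x y < K * K * Mf x y) by (apply Hl; lra). nra.
  - assert (Hw : Pf x y < K * K * Mf x y) by nra. apply Hl in Hw. lra.
Qed.

Lemma X_gt0 x y : Sf x y > 0 -> (0 < Xf K RHO x y <-> g4 s x y > 0).
Proof.
  intros HS. pose proof (P_pos x y HS). pose proof (M_pos x y HS). pose proof RHO_pos.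
  unfold Xf. rewrite div_gt_iff by auto.
  assert (Hl : ln (Mf x y) < ln (K * K * Pf x y) <-> Mf x y < K * K * Pf x y) by (apply ln_lt_iff; [lra|apply KKpos; lra]).
  rewrite lnKK in Hl by auto. pose proof (g4_rel x y). unfold RHO.
  split; intros Hq.
  - assert (Mf x y < K * K * Pf x y) by (apply Hl; lra). nra.
  - assert (Hw : Mf x y < K * K * Pf x y) by nra. apply Hl in Hw. lra.
Qed.

Lemma X_le1 x y : Sf x y > 0 -> (Xf K RHO x y <= 1 <-> g3 s x y >= 0).
Proof.
  intros HS. pose proof (P_pos x y HS). pose proof (M_pos x y HS). pose proof RHO_pos.
  unfold Xf. rewrite div_le_iff by auto.
  assert (Hl : ln (Pf x y) <= ln (K * K * Mf x y) <-> Pf x y <= K * K * Mf x y) by (apply ln_le_iff; [lra|apply KKpos; lra]).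
  rewrite lnKK in Hl by auto. pose proof (g3_rel x y). unfold RHO.
  split; intros Hq.
  - assert (Pf x y <= K * K * Mf x y) by (apply Hl; lra). nra.
  - assert (Hw : Pf x y <= K * K * Mf x y) by nra. apply Hl in Hw. lra.
Qed.

Lemma X_ge0 x y : Sf x y > 0 -> (0 <= Xf K RHO x y <-> g4 s x y >= 0).
Proof.
  intros HS. pose proof (P_pos x y HS). pose proof (M_pos x y HS). pose proof RHO_pos.
  unfold Xf. rewrite div_ge_iff by auto.
  assert (Hl : ln (Mf x y) <= ln (K * K * Pf x y) <-> Mf x y <= K * K * Pf x y) by (apply ln_le_iff; [lra|apply KKpos; lra]).
  rewrite lnKK in Hl by auto. pose proof (g4_rel x y). unfold RHO.
  split; intros Hq.
  - assert (Mf x y <= K * K * Pf x y) by (apply Hl; lra). nra.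
  - assert (Hw : Mf x y <= K * K * Pf x y) by nra. apply Hl in Hw. lra.
Qed.

Lemma X_eq1 x y : Sf x y > 0 -> g3 s x y = 0 -> Xf K RHO x y = 1.
Proof.
  intros HS Hg. pose proof (P_pos x y HS). pose proof (M_pos x y HS). pose proof RHO_pos.
  pose proof (g3_rel x y) as Hr. rewrite Hg in Hr.
  assert (He : Pf x y = K * K * Mf x y) by lra. unfold Xf. rewrite He, lnKK by auto.
  unfold RHO in *. field. lra.
Qed.

Lemma X_eq0 x y : Sf x y > 0 -> g4 s x y = 0 -> Xf K RHO x y = 0.
Proof.
  intros HS Hg. pose proof (P_pos x y HS). pose proof (M_pos x y HS). pose proof RHO_pos.
  pose proof (g4_rel x y) as Hr. rewrite Hg in Hr.
  assert (He : Mf x y = K * K * Pf x y) by lra. unfold Xf. rewrite He, lnKK by auto.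
  unfold RHO in *. field. lra.
Qed.
End Xsec.

Section Ysec.
Variables (t RHO : R).
Hypothesis Ht : t > 0.
Hypothesis HR : RHO > 0.
Let PHI := atan t.

Lemma T_rel1 x y : Sf x y > 0 -> Tf x y + t = g1 t x y / Sf x y.
Proof. intros. unfold Tf, g1. field. lra. Qed.
Lemma T_rel2 x y : Sf x y > 0 -> t - Tf x y = g2 t x y / Sf x y.
Proof. intros. unfold Tf, g2. field. lra. Qed.

Lemma Y_gt0 x y : Sf x y > 0 -> (0 < Yf PHI RHO x y <-> g1 t x y > 0).
Proof.
  intros HS. unfold Yf. rewrite div_gt_iff by auto. rewrite Rmult_0_l.
  pose proof (atan_lt_iff (-t) (Tf x y)). rewrite atan_opp in H. unfold PHI.
  pose proof (T_rel1 x y HS). split; intros Hq.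
  - assert (Ha : -t < Tf x y) by (apply H; lra).
    assert (Hb : 0 < g1 t x y / Sf x y) by lra.
    apply (Rmult_lt_compat_r (Sf x y)) in Hb; auto. replace (g1 t x y / Sf x y * Sf x y) with (g1 t x y) in Hb by (field; lra). lra.
  - assert (Hb : 0 < g1 t x y / Sf x y) by (apply Rdiv_lt_0_compat; lra).
    assert (Ha : -t < Tf x y) by lra. apply H in Ha. lra.
Qed.

Lemma Y_lth x y : Sf x y > 0 -> (Yf PHI RHO x y < 2 * PHI / RHO <-> g2 t x y > 0).
Proof.
  intros HS. unfold Yf. unfold Rdiv at 2. rewrite div_lt_iff by auto.
  replace (2 * PHI * / RHO * RHO) with (2 * PHI) by (field; lra).
  pose proof (atan_lt_iff (Tf x y) t). unfold PHI.
  pose proof (T_rel2 x y HS). split; intros Hq.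
  - assert (Ha : Tf x y < t) by (apply H; lra).
    assert (Hb : 0 < g2 t x y / Sf x y) by lra.
    apply (Rmult_lt_compat_r (Sf x y)) in Hb; auto. replace (g2 t x y / Sf x y * Sf x y) with (g2 t x y) in Hb by (field; lra). lra.
  - assert (Hb : 0 < g2 t x y / Sf x y) by (apply Rdiv_lt_0_compat; lra).
    assert (Ha : Tf x y < t) by lra. apply H in Ha. lra.
Qed.

Lemma Y_ge0 x y : Sf x y > 0 -> (0 <= Yf PHI RHO x y <-> g1 t x y >= 0).
Proof.
  intros HS. unfold Yf. rewrite div_ge_iff by auto. rewrite Rmult_0_l.
  pose proof (atan_le_iff (-t) (Tf x y)). rewrite atan_opp in H. unfold PHI.
  pose proof (T_rel1 x y HS). split; intros Hq.
  - assert (Ha : -t <= Tf x y) by (apply H; lra).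
    assert (Hb : 0 <= g1 t x y / Sf x y) by lra.
    apply (Rmult_le_compat_r (Sf x y)) in Hb; [|lra]. replace (g1 t x y / Sf x y * Sf x y) with (g1 t x y) in Hb by (field; lra). lra.
  - assert (Hb : 0 <= g1 t x y / Sf x y) by (unfold Rdiv; apply Rmult_le_pos; [lra|left; apply Rinv_0_lt_compat; lra]).
    assert (Ha : -t <= Tf x y) by lra. apply H in Ha. lra.
Qed.

Lemma Y_leh x y : Sf x y > 0 -> (Yf PHI RHO x y <= 2 * PHI / RHO <-> g2 t x y >= 0).
Proof.
  intros HS. unfold Yf. unfold Rdiv at 2. rewrite div_le_iff by auto.
  replace (2 * PHI * / RHO * RHO) with (2 * PHI) by (field; lra).
  pose proof (atan_le_iff (Tf x y) t). unfold PHI.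
  pose proof (T_rel2 x y HS). split; intros Hq.
  - assert (Ha : Tf x y <= t) by (apply H; lra).
    assert (Hb : 0 <= g2 t x y / Sf x y) by lra.
    apply (Rmult_le_compat_r (Sf x y)) in Hb; [|lra]. replace (g2 t x y / Sf x y * Sf x y) with (g2 t x y) in Hb by (field; lra). lra.
  - assert (Hb : 0 <= g2 t x y / Sf x y) by (unfold Rdiv; apply Rmult_le_pos; [lra|left; apply Rinv_0_lt_compat; lra]).
    assert (Ha : Tf x y <= t) by lra. apply H in Ha. lra.
Qed.

Lemma Y_eq0 x y : Sf x y > 0 -> g1 t x y = 0 -> Yf PHI RHO x y = 0.
Proof.
  intros HS Hg. pose proof (T_rel1 x y HS). rewrite Hg in H.
  assert (Hq : Tf x y = - t) by (unfold Rdiv in H; rewrite Rmult_0_l in H; lra).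
  unfold Yf. rewrite Hq, atan_opp. unfold PHI. field. lra.
Qed.

Lemma Y_eqh x y : Sf x y > 0 -> g2 t x y = 0 -> Yf PHI RHO x y = 2 * PHI / RHO.
Proof.
  intros HS Hg. pose proof (T_rel2 x y HS). rewrite Hg in H.
  assert (Hq : Tf x y = t) by (unfold Rdiv in H; rewrite Rmult_0_l in H; lra).
  unfold Yf. rewrite Hq. unfold PHI. field. lra.
Qed.
End Ysec.

Definition mkF (X Y : R -> R -> R) (z : Cpx) : Cpx := (X (fst z) (snd z), Y (fst z) (snd z)).

Lemma Cmod_pair_le a b : Cmod (a, b) <= Rabs a + Rabs b.
Proof. apply Cmod_le_nrm. Qed.

Lemma holo_pt X Y x y A B : D2 X x y A B -> D2 Y x y (- B) A ->
  exists l : Cpx, forall eps, eps > 0 -> exists delta, delta > 0 /\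
    forall h : Cpx, Cmod h < delta ->
      Cmod (Csub (Csub (mkF X Y (Cadd (x, y) h)) (mkF X Y (x, y))) (Cmul l h)) <= eps * Cmod h.
Proof.
  intros HX HY. exists (A, - B). intros eps He.
  destruct (HX (eps / 4) ltac:(lra)) as [d1 [Hd1 H1]].
  destruct (HY (eps / 4) ltac:(lra)) as [d2 [Hd2 H2]].
  exists (Rmin d1 d2 / 2); split. { assert (0 < Rmin d1 d2) by (apply Rmin_glb_lt; lra). lra. }
  intros [h1 h2] Hh. pose proof (nrm_le_Cmod h1 h2). pose proof (Rmin_l d1 d2). pose proof (Rmin_r d1 d2).
  specialize (H1 h1 h2 ltac:(lra)). specialize (H2 h1 h2 ltac:(lra)).
  unfold mkF, Csub, Cadd, Cmul; simpl.
  eapply Rle_trans; [apply Cmod_pair_le|].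
  replace (X (x + h1) (y + h2) - X x y - (A * h1 - - B * h2)) with (X (x + h1) (y + h2) - X x y - (A * h1 + B * h2)) by ring.
  replace (Y (x + h1) (y + h2) - Y x y - (A * h2 + - B * h1)) with (Y (x + h1) (y + h2) - Y x y - (- B * h1 + A * h2)) by ring.
  assert (eps / 2 * nrm h1 h2 <= eps * Cmod (h1, h2)) by nra.
  lra.
Qed.

Lemma cont_pt X Y x y A B C D : D2 X x y A B -> D2 Y x y C D ->
  forall eps, eps > 0 -> exists delta, delta > 0 /\ forall w, Cmod (Csub w (x, y)) < delta ->
    Cmod (Csub (mkF X Y w) (mkF X Y (x, y))) < eps.
Proof.
  intros HX HY eps He.
  destruct (D2_cont _ _ _ _ _ HX (eps / 2) ltac:(lra)) as [d1 [Hd1 H1]].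
  destruct (D2_cont _ _ _ _ _ HY (eps / 2) ltac:(lra)) as [d2 [Hd2 H2]].
  exists (Rmin d1 d2 / 2); split. { assert (0 < Rmin d1 d2) by (apply Rmin_glb_lt; lra). lra. }
  intros [w1 w2] Hw. unfold Csub in Hw; simpl in Hw.
  pose proof (nrm_le_Cmod (w1 - x) (w2 - y)). pose proof (Rmin_l d1 d2). pose proof (Rmin_r d1 d2).
  specialize (H1 (w1 - x) (w2 - y) ltac:(lra)). specialize (H2 (w1 - x) (w2 - y) ltac:(lra)).
  replace (x + (w1 - x)) with w1 in * by ring. replace (y + (w2 - y)) with w2 in * by ring.
  unfold mkF, Csub; simpl. eapply Rle_lt_trans; [apply Cmod_pair_le|]. lra.
Qed.

Lemma closure_ge0 (Dm : Cpx -> Prop) f x y a b : D2 f x y a b ->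
  (forall w, Dm w -> f (fst w) (snd w) > 0) -> closure Dm (x, y) -> f x y >= 0.
Proof.
  intros Hd Hpos Hcl. destruct (Rle_or_lt 0 (f x y)) as [|Hneg]; [lra|].
  destruct (D2_cont _ _ _ _ _ Hd (- f x y)) as [d [Hd0 Hc]]; [lra|].
  destruct (Hcl (d / 2)) as [[w1 w2] [Dw Hw]]; [lra|].
  specialize (Hpos _ Dw). simpl in Hpos. unfold Csub in Hw; simpl in Hw.
  pose proof (nrm_le_Cmod (w1 - x) (w2 - y)).
  specialize (Hc (w1 - x) (w2 - y) ltac:(lra)).
  replace (x + (w1 - x)) with w1 in Hc by ring. replace (y + (w2 - y)) with w2 in Hc by ring.
  apply Rabs_def2 in Hc. lra.
Qed.

Lemma D2_Sx x y : exists a b, D2 Sf x y a b.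
Proof. eexists; eexists; apply D2_S. Qed.
Lemma D2_g1 t x y : exists a b, D2 (g1 t) x y a b.
Proof. eexists; eexists. unfold g1. apply D2_sub; apply D2_scal; [apply D2_S|apply D2_fst]. Qed.
Lemma D2_g2 t x y : exists a b, D2 (g2 t) x y a b.
Proof. eexists; eexists. unfold g2. apply D2_add; apply D2_scal; [apply D2_S|apply D2_fst]. Qed.
Lemma D2_Q x y : exists a b, D2 (fun x y => x * x + y * y + 1) x y a b.
Proof. eexists; eexists. apply D2_add; [apply D2_add; apply D2_sq; [apply D2_fst|apply D2_snd]|apply D2_const]. Qed.
Lemma D2_g3 s x y : exists a b, D2 (g3 s) x y a b.
Proof. destruct (D2_Q x y) as [a [b H]]. eexists; eexists. unfold g3. apply D2_sub; apply D2_scal; [apply H|apply D2_snd]. Qed.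
Lemma D2_g4 s x y : exists a b, D2 (g4 s) x y a b.
Proof. destruct (D2_Q x y) as [a [b H]]. eexists; eexists. unfold g4. apply D2_add; apply D2_scal; [apply H|apply D2_snd]. Qed.

Lemma sc2 x : sin x ^ 2 + cos x ^ 2 = 1.
Proof. pose proof (sin2_cos2 x). unfold Rsqr in H. lra. Qed.

Lemma th_facts th : 0 < th < PI / 2 ->
  0 < tan (th / 2) < 1 /\ sin th = 2 * tan (th / 2) / (1 + tan (th / 2) ^ 2) /\
  sin th > 0 /\ cos th > 0.
Proof.
  intros Hth. pose proof PI_RGT_0.
  assert (Hu0 : 0 < tan (th / 2)) by (apply tan_gt_0; lra).
  assert (Hu1 : tan (th / 2) < 1).
  { rewrite <- tan_PI4. apply tan_increasing; lra. }
  assert (Hc2 : 0 < cos (th / 2)) by (apply cos_gt_0; lra).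
  repeat split; auto.
  - replace th with (2 * (th / 2)) at 1 by field. rewrite sin_2a. unfold tan.
    pose proof (sc2 (th / 2)).
    assert (Hq : 1 + (sin (th / 2) / cos (th / 2)) ^ 2 = 1 / cos (th / 2) ^ 2). { field_simplify_eq; [|lra]. lra. } rewrite Hq.

    field. lra.
  - apply sin_gt_0; lra.
  - apply cos_gt_0; lra.
Qed.

Lemma K_facts u : 0 < u < 1 ->
  (1 + u) / (1 - u) > 1 /\
  2 * u / (1 + u ^ 2) = ((1 + u) / (1 - u) * ((1 + u) / (1 - u)) - 1) / ((1 + u) / (1 - u) * ((1 + u) / (1 - u)) + 1).
Proof.
  intros Hu. split.
  - apply div_gt_iff; lra.
  - field. split; [lra|]. nra.
Qed.

Lemma S_pos_of t s x y : t > 0 -> 0 < s < 1 -> Sf x y >= 0 -> g1 t x y >= 0 -> g2 t x y >= 0 ->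
  g3 s x y >= 0 -> g4 s x y >= 0 -> Sf x y > 0.
Proof.
  unfold g1, g2, g3, g4. intros Ht Hs HS H1 H2 H3 H4.
  destruct HS as [HS|HS]; [lra|]. exfalso. rewrite HS in H1, H2.
  assert (x = 0) by lra. subst x. unfold Sf in HS.
  assert (y * y = 1) by lra. assert (y <= s) by nra. assert (- s <= y) by nra. nra.
Qed.

Lemma closure_of r th x y : 0 < r < 1 -> sin th > 0 -> cos th > 0 ->
  Sf x y > 0 -> g1 (tt r) x y >= 0 -> g2 (tt r) x y >= 0 -> g3 (sin th) x y >= 0 -> g4 (sin th) x y >= 0 ->
  closure (Qdom r th) (x, y).
Proof.
  intros Hr Hs Hc HS H1 H2 H3 H4 eps He.
  pose proof (tt_pos r Hr) as Ht. set (t := tt r) in *. set (s := sin th) in *.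
  set (l := 1 - Rmin eps 1 / 2).
  assert (Hm1 : Rmin eps 1 <= 1) by apply Rmin_r. assert (Hme : Rmin eps 1 <= eps) by apply Rmin_l.
  assert (Hm0 : 0 < Rmin eps 1) by (apply Rmin_glb_lt; lra).
  assert (Hl : 0 < l < 1) by (unfold l; lra).
  set (m := x * x + y * y).
  assert (Hm : 0 <= m < 1) by (unfold m, Sf in *; nra).
  exists (l * x, l * y). split.
  - apply (Qdom_iff r th Hr Hs Hc (sc2 th)). fold t s.
    unfold Sf, g1, g2, g3, g4 in *.
    assert (E1 : t * (1 - l * x * (l * x) - l * y * (l * y)) - 2 * (l * x) =
                 l * (t * (1 - x * x - y * y) - 2 * x) + t * (1 - l) * (1 + l * m)) by (unfold m; ring).
    assert (E2 : t * (1 - l * x * (l * x) - l * y * (l * y)) + 2 * (l * x) =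
                 l * (t * (1 - x * x - y * y) + 2 * x) + t * (1 - l) * (1 + l * m)) by (unfold m; ring).
    assert (E3 : s * (l * x * (l * x) + l * y * (l * y) + 1) - 2 * (l * y) =
                 l * (s * (x * x + y * y + 1) - 2 * y) + s * (1 - l) * (1 - l * m)) by (unfold m; ring).
    assert (E4 : s * (l * x * (l * x) + l * y * (l * y) + 1) + 2 * (l * y) =
                 l * (s * (x * x + y * y + 1) + 2 * y) + s * (1 - l) * (1 - l * m)) by (unfold m; ring).
    assert (P1 : 0 < t * (1 - l) * (1 + l * m)) by (apply Rmult_lt_0_compat; [apply Rmult_lt_0_compat|]; nra).
    assert (P2 : 0 < s * (1 - l) * (1 - l * m)) by (apply Rmult_lt_0_compat; [apply Rmult_lt_0_compat|]; nra).
    unfold Sf. rewrite E1, E2, E3, E4. assert (Hll : l * l * m < 1) by (assert (l * l < 1) by nra; nra). unfold m in Hll. repeat split; [nra| | | |]; (apply Rplus_le_lt_0_compat; [apply Rmult_le_pos; unfold Sf in *; lra|lra]).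
  - apply Cmod_lt_iff; [lra|]. unfold Csub; simpl.
    assert (E : (l * x - x) * ((l * x - x) * 1) + (l * y - y) * ((l * y - y) * 1) = (1 - l) ^ 2 * m) by (unfold m; ring).
    rewrite E. assert ((1 - l) ^ 2 * m <= (1 - l) ^ 2) by (assert (0 <= (1 - l) ^ 2) by nra; nra).
    assert (1 - l <= eps / 2) by (unfold l; lra). nra.
Qed.

Lemma G_spec K RHO PHI X Y : RHO <> 0 -> - (PI / 2) < RHO * Y - PHI < PI / 2 ->
  exists x y, Sf x y > 0 /\ Xf K RHO x y = X /\ Yf PHI RHO x y = Y.
Proof.
  intros HR Ha.
  set (a := RHO * Y - PHI) in *. set (L := RHO * X - ln K). set (e := exp L).
  assert (He : 0 < e) by apply exp_pos.
  assert (Hca : 0 < cos a) by (apply cos_gt_0; lra).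
  set (p := e * cos a). set (q := e * sin a).
  assert (Hp : 0 < p) by (unfold p; apply Rmult_lt_0_compat; lra).
  set (D := (p + 1) ^ 2 + q ^ 2).
  assert (HD : 0 < D) by (unfold D; nra).
  exists (-2 * q / D), ((p * p + q * q - 1) / D).
  assert (HS : Sf (-2 * q / D) ((p * p + q * q - 1) / D) = 4 * p / D) by (unfold Sf; unfold D in *; field; lra).
  assert (HM : Mf (-2 * q / D) ((p * p + q * q - 1) / D) = 4 / D) by (unfold Mf; unfold D in *; field; lra).
  assert (HP : Pf (-2 * q / D) ((p * p + q * q - 1) / D) = (p * p + q * q) * (4 / D)) by (unfold Pf; unfold D in *; field; lra).
  assert (Hm : p * p + q * q = e * e) by (unfold p, q; pose proof (sc2 a); nra).
  assert (H4D : 0 < 4 / D) by (apply Rdiv_lt_0_compat; lra).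
  split; [|split].
  - rewrite HS. apply Rdiv_lt_0_compat; lra.
  - unfold Xf. rewrite HP, HM, Hm. rewrite ln_mult by nra. rewrite ln_mult by lra.
    unfold e. rewrite ln_exp. unfold L. field. auto.
  - unfold Yf. assert (HT : Tf (-2 * q / D) ((p * p + q * q - 1) / D) = tan a).
    { unfold Tf. rewrite HS. unfold tan, q, p. field. split; lra. }
    rewrite HT, atan_tan by lra. unfold a. field. auto.
Qed.

Lemma ln_div' a b : 0 < a -> 0 < b -> ln (a / b) = ln a - ln b.
Proof. intros. unfold Rdiv. rewrite ln_mult, ln_Rinv; auto. apply Rinv_0_lt_compat; auto. Qed.

Lemma F_inj K RHO PHI x1 y1 x2 y2 : RHO <> 0 -> Sf x1 y1 > 0 -> Sf x2 y2 > 0 ->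
  Xf K RHO x1 y1 = Xf K RHO x2 y2 -> Yf PHI RHO x1 y1 = Yf PHI RHO x2 y2 -> x1 = x2 /\ y1 = y2.
Proof.
  intros HR HS1 HS2 EX EY.
  pose proof (P_pos _ _ HS1). pose proof (M_pos _ _ HS1).
  pose proof (P_pos _ _ HS2). pose proof (M_pos _ _ HS2).
  assert (Em : Pf x1 y1 / Mf x1 y1 = Pf x2 y2 / Mf x2 y2).
  { apply ln_inv; try (apply Rdiv_lt_0_compat; lra). rewrite !ln_div' by lra.
    unfold Xf in EX.
    assert (E1 : (ln (Pf x1 y1) - ln (Mf x1 y1)) / 2 + ln K = (ln (Pf x2 y2) - ln (Mf x2 y2)) / 2 + ln K).
    { apply (Rmult_eq_reg_r (/ RHO)); [exact EX | apply Rinv_neq_0_compat; auto]. }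
    lra. }
  assert (ET : Tf x1 y1 = Tf x2 y2).
  { apply atan_inj. unfold Yf in EY.
    assert (E1 : atan (Tf x1 y1) + PHI = atan (Tf x2 y2) + PHI).
    { apply (Rmult_eq_reg_r (/ RHO)); [exact EY | apply Rinv_neq_0_compat; auto]. }
    lra. }
  set (p1 := Sf x1 y1 / Mf x1 y1). set (q1 := -2 * x1 / Mf x1 y1).
  set (p2 := Sf x2 y2 / Mf x2 y2). set (q2 := -2 * x2 / Mf x2 y2).
  assert (Hp1 : 0 < p1) by (apply Rdiv_lt_0_compat; lra).
  assert (Hp2 : 0 < p2) by (apply Rdiv_lt_0_compat; lra).
  assert (T1 : Tf x1 y1 = q1 / p1) by (unfold Tf, q1, p1; field; lra).
  assert (T2 : Tf x2 y2 = q2 / p2) by (unfold Tf, q2, p2; field; lra).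
  assert (M1 : Pf x1 y1 / Mf x1 y1 = p1 * p1 + q1 * q1).
  { unfold p1, q1. assert (Pf x1 y1 * Mf x1 y1 = Sf x1 y1 * Sf x1 y1 + 4 * x1 * x1) by (unfold Pf, Mf, Sf; ring).
    field_simplify_eq; [|lra]. nra. }
  assert (M2 : Pf x2 y2 / Mf x2 y2 = p2 * p2 + q2 * q2).
  { unfold p2, q2. assert (Pf x2 y2 * Mf x2 y2 = Sf x2 y2 * Sf x2 y2 + 4 * x2 * x2) by (unfold Pf, Mf, Sf; ring).
    field_simplify_eq; [|lra]. nra. }
  set (T := Tf x1 y1) in *.
  assert (Q1 : q1 = T * p1) by (rewrite T1; field; lra).
  assert (Q2 : q2 = T * p2) by (rewrite ET, T2; field; lra).
  assert (Epp : p1 * p1 * (1 + T * T) = p2 * p2 * (1 + T * T)) by (rewrite Q1, Q2 in *; nra).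
  assert (Ep : p1 = p2).
  { assert (p1 * p1 = p2 * p2) by (apply (Rmult_eq_reg_r (1 + T * T)); [lra|nra]). nra. }
  assert (Eq : q1 = q2) by (rewrite Q1, Q2, Ep; ring).
  assert (D1 : (p1 + 1) ^ 2 + q1 ^ 2 = 4 / Mf x1 y1).
  { unfold p1, q1. field_simplify_eq; [|lra]. unfold Sf, Mf. ring. }
  assert (D2' : (p2 + 1) ^ 2 + q2 ^ 2 = 4 / Mf x2 y2).
  { unfold p2, q2. field_simplify_eq; [|lra]. unfold Sf, Mf. ring. }
  rewrite Ep, Eq in D1. rewrite D1 in D2'.
  assert (EM : Mf x1 y1 = Mf x2 y2).
  { apply (Rmult_eq_reg_r (/ Mf x1 y1 * / Mf x2 y2)).
    - replace (Mf x1 y1 * (/ Mf x1 y1 * / Mf x2 y2)) with (4 / Mf x2 y2 / 4) by (field; lra).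
      replace (Mf x2 y2 * (/ Mf x1 y1 * / Mf x2 y2)) with (4 / Mf x1 y1 / 4) by (field; lra).
      rewrite D2'. reflexivity.
    - apply Rmult_integral_contrapositive; split; apply Rinv_neq_0_compat; lra. }
  split.
  - assert (x1 = - q1 * Mf x1 y1 / 2) by (unfold q1; field; lra).
    assert (x2 = - q2 * Mf x2 y2 / 2) by (unfold q2; field; lra).
    rewrite H3, H4, Eq, EM. reflexivity.
  - assert (y1 = Mf x1 y1 * (Pf x1 y1 / Mf x1 y1 - 1) / 4) by (unfold Pf, Mf in *; field; lra).
    assert (y2 = Mf x2 y2 * (Pf x2 y2 / Mf x2 y2 - 1) / 4) by (unfold Pf, Mf in *; field; lra).
    rewrite H3, H4, Em, EM. reflexivity.
Qed.

Lemma closure_props r th x y : 0 < r < 1 -> sin th > 0 -> cos th > 0 -> sin th < 1 ->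
  closure (Qdom r th) (x, y) ->
  Sf x y > 0 /\ g1 (tt r) x y >= 0 /\ g2 (tt r) x y >= 0 /\ g3 (sin th) x y >= 0 /\ g4 (sin th) x y >= 0.
Proof.
  intros Hr Hs Hc Hs1 Hcl.
  assert (Hq : forall w, Qdom r th w -> Sf (fst w) (snd w) > 0 /\ g1 (tt r) (fst w) (snd w) > 0 /\
            g2 (tt r) (fst w) (snd w) > 0 /\ g3 (sin th) (fst w) (snd w) > 0 /\ g4 (sin th) (fst w) (snd w) > 0).
  { intros [w1 w2] Hw. simpl. apply (Qdom_iff r th Hr Hs Hc (sc2 th)). exact Hw. }
  destruct (D2_Sx x y) as [a0 [b0 D0]].
  destruct (D2_g1 (tt r) x y) as [a1 [b1 D1]].
  destruct (D2_g2 (tt r) x y) as [a2 [b2 D2']].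
  destruct (D2_g3 (sin th) x y) as [a3 [b3 D3]].
  destruct (D2_g4 (sin th) x y) as [a4 [b4 D4]].
  pose proof (closure_ge0 _ _ _ _ _ _ D0 (fun w Hw => proj1 (Hq w Hw)) Hcl).
  pose proof (closure_ge0 _ _ _ _ _ _ D1 (fun w Hw => proj1 (proj2 (Hq w Hw))) Hcl).
  pose proof (closure_ge0 _ _ _ _ _ _ D2' (fun w Hw => proj1 (proj2 (proj2 (Hq w Hw)))) Hcl).
  pose proof (closure_ge0 _ _ _ _ _ _ D3 (fun w Hw => proj1 (proj2 (proj2 (proj2 (Hq w Hw))))) Hcl).
  pose proof (closure_ge0 _ _ _ _ _ _ D4 (fun w Hw => proj2 (proj2 (proj2 (proj2 (Hq w Hw))))) Hcl).
  repeat split; auto.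
  apply (S_pos_of (tt r) (sin th)); auto. apply tt_pos; auto.
Qed.

Theorem mainTheorem2 (r th : R) (a b c d : Cpx) :
  0 < r < 1 -> 0 < th < PI / 2 ->
  (Cmod a < 1 /\ Cre a < 0 /\ Cim a > 0 /\
   Cmod (Csub a (upper_center th)) = orth_radius th /\
   Cmod (Csub a (left_center r)) = lens_radius r) ->
  (Cmod b < 1 /\ Cre b < 0 /\ Cim b < 0 /\
   Cmod (Csub b (lower_center th)) = orth_radius th /\
   Cmod (Csub b (left_center r)) = lens_radius r) ->
  (Cmod c < 1 /\ Cre c > 0 /\ Cim c < 0 /\
   Cmod (Csub c (lower_center th)) = orth_radius th /\
   Cmod (Csub c (right_center r)) = lens_radius r) ->
  (Cmod d < 1 /\ Cre d > 0 /\ Cim d > 0 /\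
   Cmod (Csub d (upper_center th)) = orth_radius th /\
   Cmod (Csub d (right_center r)) = lens_radius r) ->
  let u := tan (th / 2) in
  let rho := 2 * ln ((1 + u) / (1 - u)) in
  let beta := arccot (2 * r / (1 - r ^ 2)) in
  IsQM (Qdom r th) a b c d ((PI - 2 * beta) / rho).
Proof.
  intros Hr Hth Ha Hb Hc Hd u rho beta.
  destruct (th_facts th Hth) as [Hu [Hsu [Hs Hc0]]].
  pose proof (sc2 th) as E.
  set (K := (1 + u) / (1 - u)) in *.
  destruct (K_facts u Hu) as [HK HsK].
  assert (Es : sin th = (K * K - 1) / (K * K + 1)) by (rewrite Hsu; exact HsK).
  assert (Hs1 : sin th < 1).
  { rewrite Es. apply div_lt_iff; nra. }
  assert (HR : rho > 0) by exact (RHO_pos K HK).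
  assert (HR0 : rho <> 0) by lra.
  pose proof (tt_pos r Hr) as Ht.
  set (PHI := atan (tt r)).
  assert (Hh : (PI - 2 * beta) / rho = 2 * PHI / rho) by (unfold beta, arccot, PHI, tt; field; lra).
  rewrite Hh.
  assert (HPHI : 0 < PHI < PI / 2).
  { unfold PHI. pose proof (atan_bound (tt r)). split; [|lra].
    rewrite <- atan_0. apply atan_increasing. lra. }
  set (F := mkF (Xf K rho) (Yf PHI rho)).
  assert (HQ := Qdom_iff r th Hr Hs Hc0 E).
  pose proof (X_lt1 K (sin th) HK Es) as XL1.
  pose proof (X_gt0 K (sin th) HK Es) as XG0.
  pose proof (X_le1 K (sin th) HK Es) as XLE1.
  pose proof (X_ge0 K (sin th) HK Es) as XGE0.
  pose proof (Y_gt0 (tt r) rho HR) as YG0.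
  pose proof (Y_lth (tt r) rho HR) as YLH.
  pose proof (Y_ge0 (tt r) rho HR) as YGE0.
  pose proof (Y_leh (tt r) rho HR) as YLEH.
  fold PHI in YG0, YLH, YGE0, YLEH.
  assert (Hhpos : 2 * PHI / rho > 0) by (apply Rdiv_lt_0_compat; lra).
  split; [exact Hhpos|]. exists F.
  split; [|split; [|split; [|split; [|split; [|split; [|split]]]]]].
  -
    intros [x y] Hz. apply HQ in Hz. destruct Hz as [HS _].
    apply (holo_pt (Xf K rho) (Yf PHI rho) x y ((x / Pf x y - x / Mf x y) / rho)
                   (((1 + y) / Pf x y + (1 - y) / Mf x y) / rho)).
    + apply D2_X; auto; [apply P_pos|apply M_pos]; auto.
    + apply D2_Y; auto; [apply P_pos|apply M_pos|]; auto; lra.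
  -
    intros [x y] Hz. apply HQ in Hz. destruct Hz as [HS [G1 [G2 [G3 G4]]]].
    unfold F, mkF, open_rect; simpl. split; split.
    + apply XG0; auto.
    + apply XL1; auto.
    + apply YG0; auto.
    + apply YLH; auto.
  -
    intros [X Y] [[HX0 HX1] [HY0 HY1]]. simpl in *.
    assert (HYr : rho * Y < 2 * PHI).
    { replace (2 * PHI) with (rho * (2 * PHI / rho)) by (field; lra). apply Rmult_lt_compat_l; lra. }
    assert (HY0' : 0 < rho * Y) by nra.
    destruct (G_spec K rho PHI X Y HR0 ltac:(lra)) as [x [y [HS [EX EY]]]].
    exists (x, y). split.
    + apply HQ. rewrite <- EX, <- EY in *. repeat split; auto.
      * apply YG0; auto.
      * apply YLH; auto.
      * apply XL1; auto.
      * apply XG0; auto.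
    + unfold F, mkF; simpl. rewrite EX, EY. reflexivity.
  -
    intros [x y] Hz eps He.
    destruct (closure_props r th x y Hr Hs Hc0 Hs1 Hz) as [HS _].
    assert (DX := D2_X K rho x y (P_pos _ _ HS) (M_pos _ _ HS) HR0).
    assert (DY := D2_Y PHI rho x y (P_pos _ _ HS) (M_pos _ _ HS) HR0 ltac:(lra)).
    destruct (cont_pt _ _ _ _ _ _ _ _ DX DY eps He) as [del [Hdel Hw]].
    exists del; split; auto.
  -
    intros [x y] Hz.
    destruct (closure_props r th x y Hr Hs Hc0 Hs1 Hz) as [HS [G1 [G2 [G3 G4]]]].
    unfold F, mkF, closed_rect; simpl. split; split.
    + apply XGE0; auto.
    + apply XLE1; auto.
    + apply YGE0; auto.
    + apply YLEH; auto.
  -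
    intros [X Y] [[HX0 HX1] [HY0 HY1]]. simpl in *.
    assert (HYr : rho * Y <= 2 * PHI).
    { replace (2 * PHI) with (rho * (2 * PHI / rho)) by (field; lra). apply Rmult_le_compat_l; lra. }
    assert (HY0' : 0 <= rho * Y) by nra.
    destruct (G_spec K rho PHI X Y HR0 ltac:(lra)) as [x [y [HS [EX EY]]]].
    exists (x, y). split.
    + rewrite <- EX, <- EY in *. apply closure_of; auto.
      * apply YGE0; auto.
      * apply YLEH; auto.
      * apply XLE1; auto.
      * apply XGE0; auto.
    + unfold F, mkF; simpl. rewrite EX, EY. reflexivity.
  -
    intros [x1 y1] [x2 y2] H1 H2 EF.
    destruct (closure_props r th x1 y1 Hr Hs Hc0 Hs1 H1) as [HS1 _].
    destruct (closure_props r th x2 y2 Hr Hs Hc0 Hs1 H2) as [HS2 _].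
    unfold F, mkF in EF; simpl in EF. injection EF as EX EY.
    destruct (F_inj K rho PHI x1 y1 x2 y2 HR0 HS1 HS2 EX EY) as [-> ->]. reflexivity.
  -
    destruct a as [a1 a2], b as [b1 b2], c as [c1 c2], d as [d1 d2].
    destruct Ha as [Ha1 [_ [_ [Ha4 Ha5]]]].
    destruct Hb as [Hb1 [_ [_ [Hb4 Hb5]]]].
    destruct Hc as [Hc1 [_ [_ [Hc4 Hc5]]]].
    destruct Hd as [Hd1 [_ [_ [Hd4 Hd5]]]].
    apply disk_lt in Ha1, Hb1, Hc1, Hd1.
    apply (orthU_eq th Hs Hc0 E) in Ha4, Hd4.
    apply (orthL_eq th Hs Hc0 E) in Hb4, Hc4.
    apply (lensL_eq r Hr) in Ha5, Hb5.
    apply (lensR_eq r Hr) in Hc5, Hd5.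
    unfold F, mkF; simpl.
    repeat split; f_equal.
    all: first [ apply (X_eq1 K (sin th) HK Es); auto
               | apply (X_eq0 K (sin th) HK Es); auto
               | apply (Y_eqh (tt r) rho HR); auto
               | apply (Y_eq0 (tt r) rho HR); auto ].
Qed.
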